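(* Let $G$ be a finite semi-3-abelian 3-group and let $x\in\Omega_{1}(G)$. Then for all $a,b\in G$, $$[x,b,a]\,[x,a,b]=1.$$
   Context: A finite 3-group $G$ is semi-3-abelian if for all $a,b\in G$: $(ab)^{3}=1$ if and only if $a^{3}b^{3}=1$. $\Omega_{1}(G)=\langle g\in G : g^{3}=1\rangle$. Commutators: $[x,y]=x^{-1}y^{-1}xy$, and left-normed $[x_1,\dots,x_n]=[[x_1,\dots,x_{n-1}],x_n]$. *)

(* Defs.v *)
From mathcomp Require Import all_boot all_fingroup all_solvable.
Set Implicit Arguments. Unset Strict Implicit. Unset Printing Implicit Defensive.
Local Open Scope group_scope.

Definition semi3abelian (gT : finGroupType) (G : {set gT}) : Prop :=
  forall a b, a \in G -> b \in G -> ((a * b) ^+ 3 == 1) = (a ^+ 3 * b ^+ 3 == 1).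

(* Main.v *)
Require Import Defs.
From mathcomp Require Import all_boot all_fingroup all_solvable.
Set Implicit Arguments. Unset Strict Implicit. Unset Printing Implicit Defensive.
Local Open Scope group_scope.

Section S.
Variables (gT : finGroupType) (G : {group gT}).
Hypothesis sG : semi3abelian G.

Lemma cube_mul u g : u \in G -> g \in G -> u ^+ 3 = 1 -> (u * g) ^+ 3 = g ^+ 3.
Proof.
move=> uG gG u3.
have := sG (groupM uG gG) (groupVr gG).
rewrite mulgK u3 eqxx expVgn => /esym.
by rewrite -eq_mulgV1 => /eqP.
Qed.

Lemma Ldiv_group : group_set 'Ldiv_(3)(G).
Proof.
apply/group_setP; split; first by rewrite !inE group1 /=; apply/eqP; apply: expg1n.
move=> u v; rewrite !inE => /andP[uG /eqP u3] /andP[vG /eqP v3].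
by rewrite groupM //= cube_mul // v3.
Qed.

Lemma Ohm_cube u : 3.-group G -> u \in 'Ohm_1(G) -> u \in G /\ u ^+ 3 = 1.
Proof.
move=> pG; rewrite (OhmE 1 pG) expn1 gen_set_id ?Ldiv_group //.
by rewrite !inE => /andP[-> /eqP].
Qed.

Lemma E3 u g : u \in G -> g \in G -> u ^+ 3 = 1 -> u ^ (g * g) * u ^ g * u = 1.
Proof.
move=> uG gG u3; have := cube_mul uG gG u3.
rewrite !expgS !expg0 !mulg1 => h.
have -> : u ^ (g * g) * u ^ g * u = (g * g)^-1 * ((u * g) * ((u * g) * (u * g))) * g^-1.
  by rewrite !conjgE !mulgA mulgK mulgK.
by rewrite h !mulgA mulgK -mulgA mulVg.
Qed.

Lemma comm_conj u g : u \in G -> g \in G -> u ^+ 3 = 1 -> commute u (u ^ g).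
Proof.
move=> uG gG u3.
have e1 := E3 uG gG u3.
have e2 : (u^-1) ^ (g * g) * (u^-1) ^ g * u^-1 = 1.
  by apply: E3; rewrite ?groupV // expVgn u3 invg1.
rewrite !conjVg -!invMg in e2.
move/eqP: e2; rewrite invg_eq1 mulgA => /eqP e3.
have e4 : u ^ (g * g) = (u * u ^ g)^-1 by apply/eqP; rewrite eq_sym eq_invg_mul e3.
rewrite e4 in e1.
by move/eqP: e1; rewrite -mulgA -eq_invg_mul invgK => /eqP.
Qed.
End S.

Section Lin.
Variables (gT : finGroupType) (K H : {group gT}) (a b : gT).
Hypotheses (cK : forall u v, u \in K -> v \in K -> commute u v)
  (nKH : H \subset 'N(K)) (aH : a \in H) (bH : b \in H)
  (e3K : forall u, u \in K -> u ^+ 3 = 1)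
  (eng : forall u g, u \in K -> g \in H -> [~ [~ u, g], g] = 1).

Lemma memR u g : u \in K -> g \in H -> [~ u, g] \in K.
Proof.
move=> uK gH; rewrite commgEl groupM ?groupV // memJ_norm //.
exact: (subsetP nKH).
Qed.

Lemma DM u v g : u \in K -> v \in K -> g \in H ->
  [~ u * v, g] = [~ u, g] * [~ v, g].
Proof.
move=> uK vK gH; rewrite commMgJ; congr (_ * _).
by apply/conjg_fixP; apply/commgP; apply: cK => //; apply: memR.
Qed.

Lemma DX u g n : u \in K -> g \in H -> [~ u ^+ n, g] = [~ u, g] ^+ n.
Proof.
move=> uK gH; elim: n => [|n IH]; first by rewrite !expg0 comm1g.
by rewrite !expgS DM ?groupX // IH.
Qed.

Lemma Dmul u g h : u \in K -> g \in H -> h \in H ->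
  [~ u, g * h] = [~ u, g] * [~ u, h] * [~ [~ u, g], h].
Proof.
move=> uK gH hH; rewrite commgMJ conjg_mulR mulgA; congr (_ * _).
by apply: cK; apply: memR.
Qed.

Lemma cube_eq1 w : w \in K -> w ^+ 2 = 1 -> w = 1.
Proof.
move=> wK w2; have := e3K wK.
by rewrite expgS w2 mulg1.
Qed.

Ltac mk AK BK := repeat (first [assumption | apply: AK | apply: BK | apply: groupX | apply: groupM | apply: groupV]).

Lemma key u : u \in K -> [~ u, a, b] * ([~ u, b, a] * [~ u, b, a, b]) = 1.
Proof.
move=> uK.
have AK v : v \in K -> [~ v, a] \in K by move=> vK; apply: memR.
have BK v : v \in K -> [~ v, b] \in K by move=> vK; apply: memR.
have abH : a * b \in H by rewrite groupM.
have aaH : a * a \in H by rewrite groupM.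
have aabH : a * a * b \in H by rewrite !groupM.
have Dab v : v \in K -> [~ v, a * b] = [~ v, a] * [~ v, b] * [~ v, a, b].
  by move=> vK; rewrite Dmul.
have Daab v : v \in K -> [~ v, a * a * b] = [~ v, a] ^+ 2 * [~ v, b] * [~ v, a, b] ^+ 2.
  move=> vK; rewrite Dmul // Dmul // (eng vK aH) mulg1.
  by rewrite !(expgS _ 1) !expg1 DM ?AK.
have E1 := eng uK abH.
have K1 := AK _ uK; have K2 := BK _ uK; have K3 := BK _ K1.
have K4 : [~ u, a] * [~ u, b] \in K by rewrite groupM.
have K5 : [~ u, a] ^+ 2 \in K by rewrite groupX.
have K6 : [~ u, a, b] ^+ 2 \in K by rewrite groupX.
have K7 : [~ u, a] ^+ 2 * [~ u, b] \in K by rewrite groupM.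
rewrite (Dab u) // (@DM (_ * _) ([~ u, a, b])) // in E1.
rewrite (@DM [~ u, a] [~ u, b] (a * b)) // in E1.
rewrite (Dab [~ u, a]) // (Dab [~ u, b]) // (Dab [~ u, a, b]) // in E1.
rewrite (eng uK aH) (eng uK bH) (eng K1 bH) comm1g !mulg1 mul1g in E1.
have E2 := eng uK aabH.
rewrite (Daab u) // (@DM (_ * _) ([~ u, a, b] ^+ 2)) // in E2.
rewrite (@DM ([~ u, a] ^+ 2) [~ u, b]) // (@DX _ _ 2 K1) ?(@DX _ _ 2 K3) // in E2.
rewrite (Daab [~ u, a]) // (Daab [~ u, b]) // (Daab [~ u, a, b]) // in E2.
rewrite (eng uK aH) (eng uK bH) (eng K1 bH) comm1g !expg1n !mulg1 mul1g in E2.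
have Kq := AK _ K2; have Kr := BK _ Kq; have Ks := AK _ K3; have Kt := BK _ Ks.
set p := [~ u, a, b] in E1 E2 K3 Ks Kt *; set q := [~ u, b, a] in E1 E2 Kq Kr *.
set r := [~ q, b] in E1 E2 Kr *; set s := [~ p, a] in E1 E2 Ks Kt *.
set t := [~ s, b] in E1 E2 Kt *.
rewrite -(@expgMn _ q r 2 (cK Kq Kr)) -(@expgMn _ p (q * r) 2 (cK K3 (groupM Kq Kr))) in E2.
rewrite -(@expgMn _ s t 2 (cK Ks Kt)) in E2.
set m := p * (q * r) in E1 E2 *; set n := s * t in E1 E2.
have mK : m \in K by apply: groupM => //; apply: groupM.
move/eqP: E1; rewrite mulg_eq1 => /eqP E1.
have En : n = m^-1 by rewrite E1 invgK.
rewrite En !expVgn in E2.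
apply: cube_eq1 => //.
move/eqP: E2; rewrite mulg_eq1 invgK => /eqP E2.
set w := m ^+ 2 in E2 *.
by have := congr1 (fun z => w^-1 * z) E2; rewrite /= mulVg expgS expg1 mulKg.
Qed.
Lemma final x : x \in K -> [~ x, b, a] * [~ x, a, b] = 1.
Proof.
move=> xK.
have K1 : [~ x, b] \in K by apply: memR.
have h1 := key K1.
rewrite (eng xK bH) !comm1g !mulg1 in h1.
have h2 := key xK.
rewrite h1 mulg1 in h2.
by rewrite (cK (memR (memR xK bH) aH) (memR (memR xK aH) bH)).
Qed.
End Lin.

Theorem lemma3p1 (gT : finGroupType) (G : {group gT}) (x : gT) :
  3.-group G -> semi3abelian G -> x \in 'Ohm_1(G) ->
  forall a b, a \in G -> b \in G -> [~ x, b, a] * [~ x, a, b] = 1.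
Proof.
move=> pG sG xO a b aG bG.
have nOG : G \subset 'N('Ohm_1(G)) by apply: normal_norm; apply: Ohm_normal.
have OP u : u \in 'Ohm_1(G) -> u \in G /\ u ^+ 3 = 1 by apply: Ohm_cube.
pose K := <<x ^: G>>%G.
have sKO : K \subset 'Ohm_1(G).
  rewrite gen_subG; apply/subsetP => _ /imsetP[g gG ->].
  by rewrite memJ_norm // (subsetP nOG).
have nKG : G \subset 'N(K) by apply: norms_gen; apply: class_norm.
have cKK : abelian K.
  rewrite abelian_gen; apply/centsP => _ /imsetP[h hG ->] _ /imsetP[k kG ->].
  have [xG x3] := OP x xO.
  have -> : x ^ k = (x ^ h) ^ (h^-1 * k) by rewrite -conjgM mulKVg.
  apply: (comm_conj sG); first by rewrite groupJ.
    by rewrite groupM ?groupV.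
  by rewrite -conjXg x3 conj1g.
have cK u v : u \in K -> v \in K -> commute u v.
  by move=> uK vK; apply: (centsP cKK).
have e3K u : u \in K -> u ^+ 3 = 1 by move=> uK; case: (OP u (subsetP sKO u uK)).
have eng u g : u \in K -> g \in G -> [~ [~ u, g], g] = 1.
  move=> uK gG; have [uG u3] := OP u (subsetP sKO u uK).
  have yK : u ^ g \in K by rewrite memJ_norm // (subsetP nKG).
  have zK : u ^ (g * g) \in K by rewrite memJ_norm // (subsetP nKG) // groupM.
  have e := E3 sG uG gG u3.
  have ez : u ^ (g * g) = u^-1 * (u ^ g)^-1.
    apply: (mulIg (u ^ g * u)); rewrite mulgA e (mulgA (u^-1 * (u ^ g)^-1) (u ^ g) u) mulgVK mulVg //.
  have yg : (u ^ g) ^ g = u ^ (g * g) by rewrite conjgM.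
  rewrite commgEl conjMg conjVg yg ez invMg invgK.
  rewrite (mulgA (u ^ g)^-1 u^-1) -(cK _ _ (groupVr uK) (groupVr yK)).

  rewrite -(mulgA (u^-1) ((u ^ g)^-1) ((u ^ g)^-1)) -(mulgA ((u ^ g)^-1) u) mulKVg.
  have y3 := e3K _ yK; rewrite !expgS expg0 mulg1 in y3.
  by rewrite -!invMg -mulgA y3 invg1.
have xK : x \in K by apply: mem_gen; apply: class_refl.
exact: (final cK nKG aG bG e3K eng xK).
Qed.
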